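(* Let $N\geq 2$ be an integer, let $I_0>0$, and let $0<\mu_{min}\leq\mu_{max}$ and $\varepsilon_{max}\geq 0$ be given constants. For $K>0$, $\mu_1\in\mathbb{R}$ and $\varepsilon\geq 0$ define $$G_N(K,\mu_1,\varepsilon)=\frac{I_0}{K}\Big[(1+K\mu_1)^N+\big(1-K\mu_1(1+\varepsilon)\big)^N-2\Big].$$ Call a pair $(\mu_1,\varepsilon)$ admissible if $\mu_{min}\leq|\mu_1|\leq\mu_{max}$ and $0\leq\varepsilon\leq\varepsilon_{max}$. Fix $K>0$. (i) If $N$ is odd, then $G_N(K,\mu_1,\varepsilon)>0$ for all admissible pairs $(\mu_1,\varepsilon)$ if and only if $$G_N(K,\mu_{min},\varepsilon_{max})>0\quad\text{and}\quad G_N(K,\mu_{max},\varepsilon_{max})>0.$$ (ii) If $N$ is even, then $G_N(K,\mu_1,\varepsilon)>0$ for all admissible pairs $(\mu_1,\varepsilon)$ if and only if either $$K>\frac{2^{1/N}-1}{\mu_{min}},$$ or both $$K\leq\frac{1}{\mu_{min}(1+\varepsilon_{max})}\quad\text{and}\quad G_N(K,\mu_{min},\varepsilon_{max})>0.$$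
   Context: Financial interpretation (not needed for the mathematical statement): two stocks have independent per-period returns with constant means $\mu_1$ and $\mu_2=\beta\mu_1$, where $\beta=(1+\varepsilon)\beta_0$ with $\beta_0\neq 0$ known and $\varepsilon\in[0,\varepsilon_{max}]$ unknown (''directionally correlated returns''), and $\mu_{min}\leq|\mu_1|\leq\mu_{max}$ (''bounded non-zero momentum''). A two-stock controller invests $I_1(k)=I_0+Kg_1(k)$ in the first stock and $I_2(k)=-I_0/\beta_0-(K/\beta_0)g_2(k)$ in the second stock, where $g_i$ are the cumulative gain-loss functions with $g_i(0)=0$, under idealized frictionless market conditions. Then the expected total gain after $N$ periods is $\mathbb{E}[g(N)]=G_N(K,\mu_1,\varepsilon)$, and the theorem characterizes the feedback parameters $K>0$ for which this expectation is positive for all admissible parameters. Here $2^{1/N}$ denotes the positive real $N$-th root of $2$. *)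

(* Defs.v *)
From Stdlib Require Import Reals Lra Lia Arith.
Open Scope R_scope.

Definition G (N : nat) (I0 K mu1 eps : R) : R :=
  I0 / K * ((1 + K * mu1) ^ N + (1 - K * mu1 * (1 + eps)) ^ N - 2).

Definition admissible (mumin mumax epsmax mu1 eps : R) : Prop :=
  mumin <= Rabs mu1 <= mumax /\ 0 <= eps <= epsmax.

Definition root2 (N : nat) : R := Rpower 2 (/ INR N).

(* Main.v *)
Require Import Defs.
From Stdlib Require Import Reals Arith.
From Stdlib Require Import Lra Lia Psatz.
From Coquelicot Require Import Coquelicot.
Open Scope R_scope.

Definition f (n : nat) (x c : R) : R := (1 + x) ^ n + (1 - x * c) ^ n - 2.

Lemma G_pos N I0 K mu1 eps : 0 < I0 -> 0 < K ->
  (0 < G N I0 K mu1 eps <-> 0 < f N (K * mu1) (1 + eps)).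
Proof.
  intros HI HK. unfold G, f.
  assert (Hp : 0 < I0 / K) by (apply Rdiv_lt_0_compat; lra).
  split; intro H.
  - destruct (Rle_or_lt ((1 + K * mu1) ^ N + (1 - K * mu1 * (1 + eps)) ^ N - 2) 0) as [H0|H0]; auto.
    exfalso. assert (I0 / K * ((1 + K * mu1) ^ N + (1 - K * mu1 * (1 + eps)) ^ N - 2) <= 0).
    { apply Rmult_le_0_l; lra. } lra.
  - apply Rmult_lt_0_compat; auto.
Qed.

Lemma pow_lt_strict a b n : 0 <= a < b -> (1 <= n)%nat -> a ^ n < b ^ n.
Proof.
  intros [Ha Hab] Hn. induction n as [|n IH]; [lia|].
  destruct n as [|n]. simpl. lra.
  assert (IH' : a ^ S n < b ^ S n) by (apply IH; lia).
  assert (0 <= a ^ S n) by (apply pow_le; lra).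
  simpl in *. nra.
Qed.

Lemma sym_gt2 y n : 0 < y -> (2 <= n)%nat -> (1 - y) ^ n + (1 + y) ^ n > 2.
Proof.
  intros Hy Hn. induction n as [|n IH]; [lia|].
  destruct (Nat.eq_dec n 1) as [->|Hn1]. simpl. nra.
  assert (IH' : (1 - y) ^ n + (1 + y) ^ n > 2) by (apply IH; lia).
  assert (Hc : (1 - y) ^ n <= (1 + y) ^ n).
  { apply Rle_trans with (Rabs ((1 - y) ^ n)). apply Rle_abs.
    rewrite <- RPow_abs. apply pow_incr. split. apply Rabs_pos.
    unfold Rabs; destruct (Rcase_abs (1 - y)); lra. }
  simpl. nra.
Qed.

Lemma neg_case n x c : (2 <= n)%nat -> x < 0 -> 1 <= c -> 0 < f n x c.
Proof.
  intros Hn Hx Hc. unfold f.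
  set (y := - x).
  assert (Hy : 0 < y) by (unfold y; lra).
  assert (E1 : 1 + x = 1 - y) by (unfold y; lra).
  assert (H2 : (1 + y) ^ n <= (1 - x * c) ^ n).
  { apply pow_incr. unfold y. nra. }
  rewrite E1. pose proof (sym_gt2 y n Hy Hn). lra.
Qed.

Lemma jensen a t n : 0 <= a -> 0 <= t <= 1 ->
  (t * a + (1 - t)) ^ n <= t * a ^ n + (1 - t).
Proof.
  intros Ha Ht. induction n as [|n IH]. simpl. lra.
  assert (Hs : 0 <= (a ^ n - 1) * (a - 1)).
  { destruct (Rle_or_lt 1 a).
    - pose proof (pow_R1_Rle a n H). nra.
    - assert (a ^ n <= 1 ^ n) by (apply pow_incr; lra). rewrite pow1 in H0. nra. }
  assert (0 <= t * a + (1 - t)) by nra.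
  simpl.
  apply Rle_trans with ((t * a + (1 - t)) * (t * a ^ n + (1 - t))).
  apply Rmult_le_compat_l; auto.
  assert (0 <= t * (1 - t) * ((a ^ n - 1) * (a - 1))).
  { apply Rmult_le_pos; auto. nra. }
  nra.
Qed.

Lemma convex_up n x1 x2 c : 0 < x1 <= x2 -> 0 <= c -> c * x2 <= 1 ->
  0 < f n x1 c -> 0 < f n x2 c.
Proof.
  intros [H1 H12] Hc Hcx H. unfold f in *.
  set (t := x1 / x2).
  assert (Ht : 0 < t <= 1).
  { unfold t. split. apply Rdiv_lt_0_compat; lra.
    apply Rmult_le_reg_r with x2. lra. field_simplify; lra. }
  assert (E1 : 1 + x1 = t * (1 + x2) + (1 - t)) by (unfold t; field; lra).
  assert (E2 : 1 - x1 * c = t * (1 - x2 * c) + (1 - t)) by (unfold t; field; lra).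
  pose proof (jensen (1 + x2) t n ltac:(lra) ltac:(lra)).
  pose proof (jensen (1 - x2 * c) t n ltac:(nra) ltac:(lra)).
  rewrite E1, E2 in H.
  assert (0 < t * ((1 + x2) ^ n + (1 - x2 * c) ^ n - 2)) by nra.
  destruct (Rle_or_lt ((1 + x2) ^ n + (1 - x2 * c) ^ n - 2) 0); auto.
  nra.
Qed.

Lemma odd_pow_mono u v n : Nat.Odd n -> u <= v -> u ^ n <= v ^ n.
Proof.
  intros [k ->] Huv.
  assert (E : forall w, w ^ (2 * k + 1) = w * (w ^ 2) ^ k).
  { intro w. rewrite pow_add, pow_mult. simpl. ring. }
  rewrite !E.
  destruct (Rle_or_lt 0 u).
  - apply Rmult_le_compat; auto. apply pow_le. nra.
    apply pow_incr. split. nra. nra.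
  - destruct (Rle_or_lt v 0).
    + assert ((v ^ 2) ^ k <= (u ^ 2) ^ k) by (apply pow_incr; split; nra).
      assert (0 <= (v ^ 2) ^ k) by (apply pow_le; nra). nra.
    + assert (0 <= (v ^ 2) ^ k) by (apply pow_le; nra).
      assert (0 <= (u ^ 2) ^ k) by (apply pow_le; nra). nra.
Qed.

Lemma odd_c_mono n x c c' : Nat.Odd n -> 0 <= x -> c <= c' -> f n x c' <= f n x c.
Proof.
  intros Ho Hx Hc. unfold f.
  assert ((1 - x * c') ^ n <= (1 - x * c) ^ n) by (apply odd_pow_mono; auto; nra).
  lra.
Qed.

Lemma deriv_f n c x : derivable_pt_lim (fun x => f n x c) x
  (INR n * (1+x)^(pred n) - c * INR n * (1-x*c)^(pred n)).
Proof.
  apply is_derive_Reals. unfold f. auto_derive. auto. unfold Rminus. ring.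
Qed.

Lemma quasi n c a x b : Nat.Odd n -> 0 < c -> 1 <= c * a -> a <= x <= b ->
  0 < f n a c -> 0 < f n b c -> 0 < f n x c.
Proof.
  intros Ho Hc Ha [Hax Hxb] Hfa Hfb.
  destruct (Rle_or_lt (f n x c) 0) as [Hfx|]; auto. exfalso.
  destruct (Req_dec a x) as [<-|Hne1]. lra.
  destruct (Req_dec x b) as [->|Hne2]. lra.
  set (d := fun y => INR n * (1+y)^(pred n) - c * INR n * (1-y*c)^(pred n)).
  destruct (MVT_cor2 (fun y => f n y c) d a x ltac:(lra) (fun y _ => deriv_f n c y))
    as [y1 [Hy1 Iy1]].
  destruct (MVT_cor2 (fun y => f n y c) d x b ltac:(lra) (fun y _ => deriv_f n c y))
    as [y2 [Hy2 Iy2]].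
  assert (D1 : d y1 < 0).
  { destruct (Rle_or_lt 0 (d y1)); auto. assert (0 <= d y1 * (x - a)) by (apply Rmult_le_pos; lra). lra. }
  assert (D2 : 0 < d y2).
  { destruct (Rle_or_lt (d y2) 0); auto. assert (d y2 * (b - x) <= 0) by (apply Rmult_le_0_r; lra). lra. }
  destruct Ho as [k Hk].
  assert (Hpred : pred n = (2 * k)%nat) by lia.
  unfold d in D1, D2. rewrite Hpred in D1, D2.
  assert (Ev : forall y, (1 - y * c) ^ (2 * k) = (y * c - 1) ^ (2 * k)).
  { intro y. rewrite !pow_mult. f_equal. ring. }
  rewrite Ev in D1, D2.
  assert (Hn : 0 < INR n) by (apply lt_0_INR; lia).
  set (m := (2 * k)%nat) in *.
  set (p1 := 1 + y1) in *. set (p2 := 1 + y2) in *.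
  set (q1 := y1 * c - 1) in *. set (q2 := y2 * c - 1) in *.
  assert (Hq1 : 0 < q1) by (unfold q1; nra).
  assert (Hq2 : 0 < q2) by (unfold q2; nra).
  assert (Hp1 : 0 < p1) by (unfold p1; nra).
  assert (Hp2 : 0 < p2) by (unfold p2; nra).
  assert (Hpq : p2 * q1 < p1 * q2) by (unfold p1, p2, q1, q2; nra).
  assert (Hpw : (p2 * q1) ^ m <= (p1 * q2) ^ m) by (apply pow_incr; split; nra).
  rewrite !Rpow_mult_distr in Hpw.
  assert (E1 : p1 ^ m < c * q1 ^ m).
  { apply Rmult_lt_reg_l with (INR n); auto. nra. }
  assert (E2 : c * q2 ^ m < p2 ^ m).
  { apply Rmult_lt_reg_l with (INR n); auto. nra. }
  assert (Pq1 : 0 < q1 ^ m) by (apply pow_lt; auto).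
  assert (Pq2 : 0 < q2 ^ m) by (apply pow_lt; auto).
  assert (c * q2 ^ m * q1 ^ m < p2 ^ m * q1 ^ m) by (apply Rmult_lt_compat_r; auto).
  assert (p1 ^ m * q2 ^ m < c * q1 ^ m * q2 ^ m) by (apply Rmult_lt_compat_r; auto).
  nra.
Qed.

Lemma odd_interval n c xmin x xmax : Nat.Odd n -> 1 <= c -> 0 < xmin <= x -> x <= xmax ->
  0 < f n xmin c -> 0 < f n xmax c -> 0 < f n x c.
Proof.
  intros Ho Hc [Hm Hmx] HxM Hfm HfM.
  destruct (Rle_or_lt (c * x) 1).
  - apply convex_up with xmin; auto; lra.
  - destruct (Rle_or_lt 1 (c * xmin)).
    + apply quasi with xmin xmax; auto; lra.
    + assert (Hfa : 0 < f n (/ c) c).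
      { apply convex_up with xmin; try lra.
        split; auto. apply Rmult_le_reg_l with c. lra. rewrite Rinv_r; lra.
        rewrite Rinv_r; lra. }
      apply quasi with (/ c) xmax; auto; try lra.
      rewrite Rinv_r; lra.
      split; auto. apply Rmult_le_reg_l with c. lra. rewrite Rinv_r; lra.
Qed.

Lemma root2_pow N : (1 <= N)%nat -> root2 N ^ N = 2 /\ 0 < root2 N.
Proof.
  intros HN. unfold root2.
  assert (Hp : 0 < Rpower 2 (/ INR N)) by (unfold Rpower; apply exp_pos).
  split; auto.
  rewrite <- Rpower_pow by auto. rewrite Rpower_mult.
  rewrite Rinv_l. apply Rpower_1; lra.
  apply not_0_INR; lia.
Qed.

Lemma even_pow_nonneg y n : Nat.Even n -> 0 <= y ^ n.
Proof. intros [k ->]. rewrite pow_mult. apply pow_le. nra. Qed.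

Theorem mainTheorem1 (N : nat) (I0 mumin mumax epsmax K : R) :
  (2 <= N)%nat -> 0 < I0 -> 0 < mumin -> mumin <= mumax -> 0 <= epsmax ->
  0 < K ->
  (Nat.Odd N ->
    ((forall mu1 eps, admissible mumin mumax epsmax mu1 eps -> 0 < G N I0 K mu1 eps)
     <-> (0 < G N I0 K mumin epsmax /\ 0 < G N I0 K mumax epsmax))) /\
  (Nat.Even N ->
    ((forall mu1 eps, admissible mumin mumax epsmax mu1 eps -> 0 < G N I0 K mu1 eps)
     <-> (K > (root2 N - 1) / mumin \/
          (K <= 1 / (mumin * (1 + epsmax)) /\ 0 < G N I0 K mumin epsmax)))).
Proof.
  intros HN HI Hmin Hmm Heps HK.
  assert (AdMin : admissible mumin mumax epsmax mumin epsmax).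
  { unfold admissible. rewrite Rabs_right by lra. lra. }
  assert (AdMax : admissible mumin mumax epsmax mumax epsmax).
  { unfold admissible. rewrite Rabs_right by lra. lra. }
  split.
  - intros Ho. split.
    + intros H. split; apply H; auto.
    + intros [H1 H2] mu1 eps [Hmu Heps1].
      rewrite G_pos in * by auto.
      destruct (Rlt_or_le mu1 0) as [Hneg|Hpos].
      * apply neg_case; [lia|nra|lra].
      * rewrite Rabs_right in Hmu by lra.
        apply Rlt_le_trans with (f N (K * mu1) (1 + epsmax)).
        apply odd_interval with (K * mumin) (K * mumax); auto; try lra; try nra.
        apply odd_c_mono; auto; nra.
  - intros He.
    destruct (root2_pow N ltac:(lia)) as [Hr Hr0].
    set (r := root2 N) in *.
    assert (Hr2 : r < 2).
    { destruct (Rlt_or_le r 2); auto.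
      assert (2 ^ 2 <= 2 ^ N). { apply Rle_pow; lra || lia. }
      assert (2 ^ N <= r ^ N) by (apply pow_incr; lra). simpl in *. lra. }
    split.
    + intros H.
      destruct (Rlt_or_le ((r - 1) / mumin) K) as [Hk|Hk]; [left; exact Hk|right].
      split; [|apply H; auto].
      assert (Hx : K * mumin <= r - 1).
      { apply Rmult_le_compat_r with (r := mumin) in Hk; try lra.
        unfold Rdiv in Hk. rewrite Rmult_assoc, Rinv_l in Hk; lra. }
      destruct (Rle_or_lt K (1 / (mumin * (1 + epsmax)))) as [|Hgt]; auto.
      exfalso.
      assert (Hxc : 1 < K * mumin * (1 + epsmax)).
      { apply Rmult_lt_compat_r with (r := mumin * (1 + epsmax)) in Hgt; try nra.
        unfold Rdiv in Hgt. rewrite Rmult_1_l, Rinv_l in Hgt; try nra. }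
      assert (Hx0 : 0 < K * mumin) by nra.
      set (eps := / (K * mumin) - 1).
      assert (Hinv : 1 < / (K * mumin)).
      { rewrite <- (Rinv_1). apply Rinv_lt_contravar; lra. }
      assert (Hinv2 : / (K * mumin) < 1 + epsmax).
      { apply Rmult_lt_reg_l with (K * mumin); auto. rewrite Rinv_r; lra. }
      assert (Had : admissible mumin mumax epsmax mumin eps).
      { unfold admissible, eps. rewrite Rabs_right by lra. lra. }
      specialize (H _ _ Had). rewrite G_pos in H by auto.
      unfold f in H.
      replace (1 - K * mumin * (1 + eps)) with 0 in H by (unfold eps; field; lra).
      rewrite pow_i in H by lia.
      assert ((1 + K * mumin) ^ N <= r ^ N) by (apply pow_incr; lra).
      lra.
    + intros Hc mu1 eps [Hmu Heps1].
      rewrite G_pos by auto.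
      destruct (Rlt_or_le mu1 0) as [Hneg|Hpos].
      * apply neg_case; [lia|nra|lra].
      * rewrite Rabs_right in Hmu by lra.
        assert (Hx : K * mumin <= K * mu1) by nra.
        assert (Hx0 : 0 < K * mumin) by nra.
        destruct Hc as [Hk | [Hk Hg]].
        -- assert (Hk' : r - 1 < K * mumin).
           { apply Rmult_lt_compat_r with (r := mumin) in Hk; try lra.
             unfold Rdiv in Hk. rewrite Rmult_assoc, Rinv_l in Hk; lra. }
           unfold f.
           assert (r ^ N < (1 + K * mu1) ^ N) by (apply pow_lt_strict; lra || lia).
           pose proof (even_pow_nonneg (1 - K * mu1 * (1 + eps)) N He). lra.
        -- rewrite G_pos in Hg by auto.
           assert (Hxc : K * mumin * (1 + epsmax) <= 1).
           { apply Rmult_le_compat_r with (r := mumin * (1 + epsmax)) in Hk; try nra.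
             unfold Rdiv in Hk. rewrite Rmult_1_l, Rinv_l in Hk; try nra. }
           destruct (Rle_or_lt (K * mu1 * (1 + epsmax)) 1).
           ++ assert (Hf : 0 < f N (K * mu1) (1 + epsmax)).
              { apply convex_up with (K * mumin); auto; lra. }
              unfold f in *.
              assert ((1 - K * mu1 * (1 + epsmax)) ^ N <= (1 - K * mu1 * (1 + eps)) ^ N).
              { apply pow_incr. nra. }
              lra.
           ++ set (a := / (1 + epsmax)).
              assert (Ha : K * mumin <= a).
              { unfold a. apply Rmult_le_reg_l with (1 + epsmax). lra.
                rewrite Rinv_r; lra. }
              assert (Ha2 : a < K * mu1).
              { unfold a. apply Rmult_lt_reg_l with (1 + epsmax). lra.
                rewrite Rinv_r; lra. }
              assert (Hfa : 0 < f N a (1 + epsmax)).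
              { apply convex_up with (K * mumin); auto; try lra.
                unfold a. rewrite Rinv_r; lra. }
              unfold f in Hfa |- *.
              replace (1 - a * (1 + epsmax)) with 0 in Hfa by (unfold a; field; lra).
              rewrite pow_i in Hfa by lia.
              assert ((1 + a) ^ N < (1 + K * mu1) ^ N) by (apply pow_lt_strict; lra || lia).
              pose proof (even_pow_nonneg (1 - K * mu1 * (1 + eps)) N He). lra.
Qed.
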